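(* Assume the general single-user setting below and let $T=\tau_n+D_n$. For $1\le\tau\le T$ and each state $i$, let $e^*(\tau,i)$ denote the smallest element of $\mathcal E$ attaining the maximum in the recursion defining $V(0,\tau,i)$. Then $$e^*(\tau+1,i)\le e^*(\tau,i)\qquad\text{for all states } i \text{ and all } 1\le\tau<T.$$
   Context: General single-user setting (perfect prediction): fix $\beta\ge0$, $\lambda\ge0$ and integers $\tau_n\ge1$, $D_n\ge0$. The channel is a finite-state Markov chain on $\{1,\dots,K\}$ with transition matrix $(P^{i,j})$. $\mathcal E\subset[0,\infty)$ is a finite set of resource levels containing $0$ and at least one positive element. For each state $i$, $\zeta(i,\cdot):\mathcal E\to[0,1]$ is the transmission success probability, with $\zeta(i,0)=0$, $\zeta(i,e)>0$ for $e>0$, and $\zeta(i,\cdot)$ is the restriction to $\mathcal E$ of a concave, strictly increasing function. The value function is defined by $V(0,0,i)=0$ and, for $1\le\tau\le\tau_n+D_n$, $$V(0,\tau,i)=\max_{e\in\mathcal E}\Big\{-\lambda e+\zeta(i,e)\beta+(1-\zeta(i,e))\sum_{j}P^{i,j}V(0,\tau-1,j)\Big\}.$$ Here $\tau$ is the remaining time to deadline of an undelivered packet, $i$ the current channel state, $\beta$ the delivery reward and $\lambda$ the per-unit resource cost. *)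

(* Defs.v *)
(* the statement is purely algebraic/order-theoretic, so it is
   stated over an arbitrary real field R (this includes the real numbers). *)
From HB Require Import structures.
From mathcomp Require Import all_boot all_order all_algebra.
Set Implicit Arguments. Unset Strict Implicit. Unset Printing Implicit Defensive.
Import Order.TTheory GRing.Theory Num.Theory.
Local Open Scope ring_scope.

Definition stochastic {R : realFieldType} {K : nat} (P : 'M[R]_K) : Prop :=
  (forall i j, 0 <= P i j) /\ (forall i, \sum_(j < K) P i j = 1).

Definition concave_nonneg {R : realFieldType} (f : R -> R) : Prop :=
  forall x y t, 0 <= x -> 0 <= y -> 0 <= t -> t <= 1 ->
    t * f x + (1 - t) * f y <= f (t * x + (1 - t) * y).

Definition strict_incr_nonneg {R : realFieldType} (f : R -> R) : Prop :=
  forall x y, 0 <= x -> x < y -> f x < f y.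

(* The quantity maximized in the recursion, with continuation values W j
   (W = V(0, tau-1, .)):  -lam e + zeta(i,e) beta + (1-zeta(i,e)) sum_j P^{i,j} W j. *)
Definition Qval {R : realFieldType} {K : nat} (P : 'M[R]_K)
  (zeta : 'I_K -> R -> R) (beta lam : R) (W : 'I_K -> R) (i : 'I_K) (e : R) : R :=
  - (lam * e) + zeta i e * beta + (1 - zeta i e) * \sum_(j < K) P i j * W j.

(* V(0, tau, i).  The maximum over E is the big max over the list E, seeded
   with the value at e = 0 (which belongs to E, so this is exactly the max). *)
Fixpoint Vfun {R : realFieldType} {K : nat} (P : 'M[R]_K)
  (zeta : 'I_K -> R -> R) (beta lam : R) (E : seq R) (tau : nat) : 'I_K -> R :=
  fun i =>
    match tau with
    | 0 => 0
    | t.+1 => \big[Num.max/Qval P zeta beta lam (Vfun P zeta beta lam E t) i 0]_(e <- E)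
                 Qval P zeta beta lam (Vfun P zeta beta lam E t) i e
    end.

Definition Qtau {R : realFieldType} {K : nat} (P : 'M[R]_K)
  (zeta : 'I_K -> R -> R) (beta lam : R) (E : seq R) (tau : nat) (i : 'I_K) (e : R) : R :=
  Qval P zeta beta lam (Vfun P zeta beta lam E tau.-1) i e.

Definition is_estar {R : realFieldType} {K : nat} (P : 'M[R]_K)
  (zeta : 'I_K -> R -> R) (beta lam : R) (E : seq R) (tau : nat) (i : 'I_K) (e : R) : Prop :=
  [/\ e \in E,
      Qtau P zeta beta lam E tau i e = Vfun P zeta beta lam E tau i
    & forall e', e' \in E -> Qtau P zeta beta lam E tau i e' = Vfun P zeta beta lam E tau i ->
                 e <= e'].

(* Main.v *)
Require Import Defs.
From HB Require Import structures.
From mathcomp Require Import all_boot all_order all_algebra.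
From mathcomp Require Import lra.
Import Order.TTheory GRing.Theory Num.Theory.
Local Open Scope ring_scope.

Lemma bigmax_le_seq (R : realFieldType) (x0 y : R) (F : R -> R) (s : seq R) :
  x0 <= y -> (forall e, e \in s -> F e <= y) ->
  \big[Num.max/x0]_(e <- s) F e <= y.
Proof.
elim: s => [|a s IH] H0 H; first by rewrite big_nil.
rewrite big_cons ge_max H ?mem_head //= IH // => e he.
by apply: H; rewrite in_cons he orbT.
Qed.

Lemma le_bigmax_seq (R : realFieldType) (x0 : R) (F : R -> R) (s : seq R) e :
  e \in s -> F e <= \big[Num.max/x0]_(e <- s) F e.
Proof.
elim: s => [|a s IH] //; rewrite in_cons big_cons le_max.
case/orP=> [/eqP->|he]; first by rewrite lexx.
by rewrite IH ?orbT.
Qed.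

Lemma seed_le_bigmax (R : realFieldType) (x0 : R) (F : R -> R) (s : seq R) :
  x0 <= \big[Num.max/x0]_(e <- s) F e.
Proof.
elim: s => [|a s IH]; first by rewrite big_nil.
by rewrite big_cons le_max IH orbT.
Qed.

Theorem theorem6 (R : realFieldType) (K : nat) (P : 'M[R]_K)
  (E : seq R) (zeta : 'I_K -> R -> R) (beta lam : R) (tau_n D_n : nat) :
  0 <= beta -> 0 <= lam -> (1 <= tau_n)%N ->
  stochastic P ->
  uniq E -> 0 \in E -> (forall e, e \in E -> 0 <= e) -> has (fun e => 0 < e) E ->
  (forall i, zeta i 0 = 0) ->
  (forall i e, e \in E -> 0 <= zeta i e <= 1) ->
  (forall i e, e \in E -> 0 < e -> 0 < zeta i e) ->
  (forall i, exists f : R -> R, concave_nonneg f /\ strict_incr_nonneg f /\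
                                (forall e, e \in E -> zeta i e = f e)) ->
  forall (i : 'I_K) (tau : nat), (1 <= tau)%N -> (tau < tau_n + D_n)%N ->
  forall e1 e2,
    is_estar P zeta beta lam E tau.+1 i e1 ->
    is_estar P zeta beta lam E tau i e2 ->
    e1 <= e2.
Proof.
move=> hb hl _ [Pge0 Psum] _ _ Ege0 _ z0 z01 _ zf i tau htau _ e1 e2
  [e1E q1 m1] [e2E q2 m2].
set V := Vfun P zeta beta lam E.
set Q := Qval P zeta beta lam.
have Qmono : forall W1 W2 j e, (forall k, W1 k <= W2 k) -> 0 <= 1 - zeta j e ->
    Q W1 j e <= Q W2 j e.
  move=> W1 W2 j e hW hz; rewrite /Q /Qval lerD2l; apply: ler_wpM2l => //.
  by apply: ler_sum => k _; apply: ler_wpM2l.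
have Vmono : forall t k, V t k <= V t.+1 k.
  elim=> [|t IH] k.
    rewrite /V /=; apply: (le_trans _ (seed_le_bigmax _ _ _ _)).
    rewrite /Qval z0 big1 => [|? _]; last by rewrite mulr0.
    by rewrite !mulr0 mul0r oppr0 !addr0.
  rewrite {1}/V /=; apply: bigmax_le_seq.
    apply: (le_trans _ (seed_le_bigmax _ _ _ _)); apply: Qmono => //.
    by rewrite z0 subr0.
  move=> e he; apply: (le_trans _ (le_bigmax_seq _ _ _ _ _ he)).
  apply: Qmono => //; have /andP[_ ?] := z01 k e he; lra.
have QleV : forall t e, e \in E -> Q (V t) i e <= V t.+1 i.
  by move=> t e he; apply: le_bigmax_seq.
case: tau htau q1 m1 q2 m2 => // t _ q1 m1 q2 m2.
rewrite /Qtau /= in q1 q2 m1 m2.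
rewrite leNgt; apply/negP => lt21.
have A : Q (V t.+1) i e2 < Q (V t.+1) i e1.
  rewrite -/Q -/V in q1; rewrite q1 lt_neqAle QleV // andbT.
  apply/negP=> /eqP h; have := m1 e2 e2E h; rewrite leNgt lt21 //.
have B : Q (V t) i e1 <= Q (V t) i e2.
  rewrite -/Q -/V in q2; rewrite q2; exact: QleV.
have Sle : \sum_(j < K) P i j * V t j <= \sum_(j < K) P i j * V t.+1 j.
  by apply: ler_sum => k _; apply: ler_wpM2l.
have zle : zeta i e2 <= zeta i e1.
  have [f [_ [fi fE]]] := zf i.
  by rewrite !fE //; apply/ltW/fi => //; apply: Ege0.
move: A B; rewrite /Q /Qval.
set s1 := \sum_(j < K) P i j * V t j in Sle *.
set s2 := \sum_(j < K) P i j * V t.+1 j in Sle *.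
move=> A B.
have : 0 <= (zeta i e1 - zeta i e2) * (s2 - s1) by apply: mulr_ge0; lra.
nra.
Qed.
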